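(* Let $m\ge1$ and let $F=(F_0,F_1,F_2)$ be a gapset filtration of multiplicity $m+1$ and depth $3$, so that $F_0=[1,m]\supseteq F_1\supseteq F_2\neq\emptyset$. Let $a_i=\max F_i$ and $F'_i=F_i\setminus\{a_i\}$ for $i=0,1,2$. Then $F'=(F'_0,F'_1,F'_2)$ is a gapset filtration (of multiplicity $m$), i.e. $[1,m-1]\cup(m+F'_1)\cup(2m+F'_2)$ is a gapset.
   Context: A gapset is a finite set $G \subset \mathbb{N}_+$ such that for all $z \in G$, whenever $z=x+y$ with $x,y\in\mathbb{N}_+$, we have $x\in G$ or $y\in G$. Its multiplicity is the least $m\ge1$ with $m\notin G$, and its depth is $\lceil c/m\rceil$ where $c=\max G+1$. For $k\ge1$, a $k$-filtration is a sequence $(F_0,\dots,F_t)$ with $F_0=[1,k-1]\supseteq F_1\supseteq\dots\supseteq F_t$; it is a gapset filtration if $\bigcup_i(ik+F_i)$ is a gapset, and its multiplicity and depth are those of that gapset. Here $j+A=\{j+a:a\in A\}$. *)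

(* Defs.v *)
(* Finite subsets of N are represented by seq nat (membership). *)
From mathcomp Require Import all_boot.
Set Implicit Arguments. Unset Strict Implicit. Unset Printing Implicit Defensive.

(* G is a gapset: G ⊂ N+, and every z in G with z = x + y, x,y >= 1, has x or y in G.
   Finiteness is automatic for a seq. *)
Definition is_gapset (G : seq nat) : Prop :=
  (forall z, z \in G -> 0 < z) /\
  (forall z x y, z \in G -> 0 < x -> 0 < y -> x + y = z -> x \in G \/ y \in G).

Definition is_multiplicity (G : seq nat) (m : nat) : Prop :=
  0 < m /\ m \notin G /\ (forall j, 0 < j < m -> j \in G).

Definition gmax (G : seq nat) : nat := \max_(x <- G) x.

(* depth = ceil(c / m) with c = max G + 1 *)
Definition depth (G : seq nat) (m : nat) : nat := ((gmax G).+1 + m.-1) %/ m.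

Definition is_filtration (k : nat) (Fs : seq (seq nat)) : Prop :=
  0 < size Fs /\
  (forall x, (x \in nth [::] Fs 0) = (0 < x < k)) /\
  (forall i, i.+1 < size Fs -> {subset nth [::] Fs i.+1 <= nth [::] Fs i}).

Definition filt_union (k : nat) (Fs : seq (seq nat)) : seq nat :=
  flatten [seq [seq i * k + x | x <- nth [::] Fs i] | i <- iota 0 (size Fs)].

Definition is_gapset_filtration (k : nat) (Fs : seq (seq nat)) : Prop :=
  is_filtration k Fs /\ is_gapset (filt_union k Fs).

Definition rem_max (F : seq nat) : seq nat := [seq x <- F | x != gmax F].

(* Main.v *)
Require Import Defs.
From mathcomp Require Import all_boot.
From mathcomp Require Import zify.

Lemma mem_shift c (A : seq nat) x :
  (x \in [seq c + y | y <- A]) = (c <= x) && (x - c \in A).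
Proof.
apply/mapP/andP => [[y Hy ->]|[H1 H2]].
  by split; [lia | rewrite addKn].
by exists (x - c) => //; lia.
Qed.

Lemma mem_fu3 k A B C x :
  (x \in filt_union k [:: A; B; C]) =
  [|| x \in A, (k <= x) && (x - k \in B) | (2 * k <= x) && (x - 2 * k \in C)].
Proof.
rewrite /filt_union /= !mem_cat !mem_shift in_nil orbF mul0n subn0 mul1n.
by [].
Qed.

Lemma mem_rem_max F x : (x \in rem_max F) = (x \in F) && (x != gmax F).
Proof. by rewrite /rem_max mem_filter andbC. Qed.

Lemma gmax_ge F x : x \in F -> x <= gmax F.
Proof. by move=> H; apply: (@leq_bigmax_seq _ F xpredT id x). Qed.

Arguments gmax_ge {F x}.

Lemma gmax_le F b : (forall x, x \in F -> x <= b) -> gmax F <= b.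
Proof. by move=> H; apply/bigmax_leqP_seq => i Hi _; apply: H. Qed.

Theorem mainTheorem14 (m : nat) (F0 F1 F2 : seq nat) :
  1 <= m ->
  is_gapset_filtration m.+1 [:: F0; F1; F2] ->
  is_multiplicity (filt_union m.+1 [:: F0; F1; F2]) m.+1 ->
  depth (filt_union m.+1 [:: F0; F1; F2]) m.+1 = 3 ->
  is_gapset_filtration m [:: rem_max F0; rem_max F1; rem_max F2].
Proof.
move=> Hm [[_ [H0 Hsub]] [Gpos Ggap]] _ _.
have S10 : {subset F1 <= F0} by apply: (Hsub 0).
have S21 : {subset F2 <= F1} by apply: (Hsub 1).
have hF0 : forall x, (x \in F0) = (0 < x <= m) by move=> x; rewrite H0.
have hF1 : forall x, x \in F1 -> 0 < x <= m by move=> x /S10; rewrite hF0.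
have hF2 : forall x, x \in F2 -> 0 < x <= m by move=> x /S21 /hF1.
have gF0 : gmax F0 = m.
  apply/eqP; rewrite eqn_leq; apply/andP; split.
    by apply: gmax_le => x; rewrite hF0; lia.
  by apply: gmax_ge; rewrite hF0; lia.
have a1m : gmax F1 <= m by apply: gmax_le => x /hF1; lia.
have a21 : gmax F2 <= gmax F1 by apply: gmax_le => x /S21 /gmax_ge.
have R0 : forall x, (x \in rem_max F0) = (0 < x < m).
  by move=> x; rewrite mem_rem_max hF0 gF0; apply/idP/idP; lia.
split.
  split => //; split => //.
  move=> [|[|i]] //= _ x.
    rewrite mem_rem_max R0 => /andP [Hx Hne].
    have := gmax_ge Hx; have := hF1 _ Hx; lia.
  rewrite !mem_rem_max => /andP [Hx Hne].
  have := gmax_ge Hx; rewrite (S21 _ Hx) /=; lia.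
split.
  move=> z; rewrite mem_fu3 R0 !mem_rem_max.
  case/or3P; first lia.
    by case/andP => H1 /andP [/hF1 H2 _]; lia.
  by case/andP => H1 /andP [/hF2 H2 _]; lia.
move=> z x y; rewrite mem_fu3 => Hz Hx Hy Hxy.
rewrite !mem_fu3 !R0.
case: (ltnP x m) => Hxm; first by left; apply/or3P; apply: Or31; lia.
case: (ltnP y m) => Hym; first by right; apply/or3P; apply: Or31; lia.
rewrite R0 !mem_rem_max in Hz.
case/or3P: Hz; first lia.
  case/andP => H1 /andP [Hf Hne].
  have := gmax_ge Hf; lia.
case/andP => H1 /andP [Hf Hne].
have Hfa := gmax_ge Hf.
have Hf1 := hF2 _ Hf.
set f := z - 2 * m in Hf Hne Hfa Hf1.
case: (posnP (x - m)) => Hu.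
  right; apply/or3P; apply: Or32; apply/andP; split; first lia.
  rewrite mem_rem_max.
  have -> : y - m = f by rewrite /f; lia.
  rewrite (S21 _ Hf) /=; lia.
case: (posnP (y - m)) => Hv.
  left; apply/or3P; apply: Or32; apply/andP; split; first lia.
  rewrite mem_rem_max.
  have -> : x - m = f by rewrite /f; lia.
  rewrite (S21 _ Hf) /=; lia.
have Hz0 : (2 * m.+1 + f) \in filt_union m.+1 [:: F0; F1; F2].
  rewrite mem_fu3; apply/or3P; apply: Or33; apply/andP; split; first lia.
  by rewrite addKn.
have := Ggap _ (m.+1 + (x - m)) (m.+1 + (y - m)) Hz0 isT isT ltac:(rewrite /f; lia).
rewrite !mem_fu3 !hF0 !addKn.
case => /or3P [H|/andP [_ H]|/andP [H _]]; try lia.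
  left; apply/or3P; apply: Or32; apply/andP; split; first lia.
  rewrite mem_rem_max H /=; lia.
right; apply/or3P; apply: Or32; apply/andP; split; first lia.
rewrite mem_rem_max H /=; lia.
Qed.
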